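(* For real parameters $a>0$, $b\ge 0$, $\alpha>0$, $n>0$, let $s^*=s^*(a,b,\alpha,n)$ denote the unique solution in $(0,n)$ of $$\alpha a n s^{-\alpha-1}-(\alpha+1)a s^{-\alpha}-b=0,$$ which is the unique minimizer of $s\mapsto \frac{a s^{-\alpha}+b}{n-s}$ over $s\in(0,n)$. Then: (i) $s^*$ is nondecreasing in $a$, and strictly increasing in $a$ whenever $b>0$; (ii) $s^*$ is strictly decreasing in $b$; (iii) $s^*$ is strictly increasing in $n$; (iv) if $b=0$, then $s^*/n=\alpha/(\alpha+1)$, independent of $a$ and $n$; (v) the fraction $s^*/n$ is nondecreasing in $a$ (strictly increasing if $b>0$), strictly decreasing in $b$, and nonincreasing in $n$; if $b>0$, then $\lim_{n\to\infty} s^*/n=0$; moreover, if $\alpha<1$, $$0\;\ge\;\frac{\partial}{\partial n}\Big(\frac{s^*}{n}\Big)\;\ge\;-\frac{\alpha}{\alpha+1}\,\frac{b}{a}\,n^{\alpha-1}.$$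
   Context: Monotonicity statements refer to $s^*$ (or $s^*/n$) viewed as a function of one parameter with the others held fixed, within the stated parameter ranges. *)

(* Defs.v *)
From Stdlib Require Import Reals Lra ClassicalEpsilon.
From Coquelicot Require Import Coquelicot.
Open Scope R_scope.

Definition Feq (a b al n s : R) : R :=
  al * a * n * Rpower s (- al - 1) - (al + 1) * a * Rpower s (- al) - b.

Definition cost (a b al n s : R) : R :=
  (a * Rpower s (- al) + b) / (n - s).

Definition sstar (a b al n : R) : R :=
  epsilon (inhabits 0) (fun s => 0 < s < n /\ Feq a b al n s = 0).

(* Main.v *)
Require Import Defs.
From Stdlib Require Import Reals Lra ClassicalEpsilon.
From Coquelicot Require Import Coquelicot.
Open Scope R_scope.

Definition Nf (a b al s : R) : R :=
  ((al + 1) * s + (b / a) * Rpower s (al + 1)) / al.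

Lemma Rpow_pos x y : 0 < Rpower x y.
Proof. unfold Rpower. apply exp_pos. Qed.

Lemma Rpow_S x al : 0 < x -> Rpower x (al + 1) = Rpower x al * x.
Proof. intros. rewrite Rpower_plus, Rpower_1; auto. Qed.

Lemma Feq_iff a b al n s : 0 < a -> 0 < al -> 0 < s ->
  (Feq a b al n s = 0 <-> Nf a b al s = n).
Proof.
  intros Ha Hal Hs. unfold Feq, Nf.
  replace (- al - 1) with (- (al + 1)) by ring.
  rewrite !Rpower_Ropp, Rpow_S by auto.
  pose proof (Rpow_pos s al) as HP. set (P := Rpower s al) in *.
  assert (E : (al * a * n * / (P * s) - (al + 1) * a * / P - b) * (P * s)
     = - (((al + 1) * s + b / a * (P * s)) / al - n) * al * a).
  { field. lra. }
  split; intro H.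
  - rewrite H in E. assert (((al + 1) * s + b / a * (P * s)) / al - n = 0).
    { assert (al * a <> 0) by nra. 
      apply (Rmult_eq_reg_r (al*a)); [|auto]. lra. }
    lra.
  - rewrite H in E. replace (n - n) with 0 in E by ring.
    assert (P * s <> 0) by nra.
    apply (Rmult_eq_reg_r (P*s)); [|auto]. lra.
Qed.

Lemma Nf_pos_c a b al : 0 < a -> 0 <= b -> 0 < al -> 0 <= b / a.
Proof. intros. unfold Rdiv. apply Rmult_le_pos; [lra|]. left; apply Rinv_0_lt_compat; lra. Qed.

Lemma Nf_incr a b al s1 s2 : 0 < a -> 0 <= b -> 0 < al -> 0 < s1 -> s1 < s2 ->
  Nf a b al s1 < Nf a b al s2.
Proof.
  intros. unfold Nf. pose proof (Nf_pos_c a b al H H0 H1).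
  assert (Rpower s1 (al+1) < Rpower s2 (al+1)) by (apply Rlt_Rpower_l; lra).
  apply Rmult_lt_compat_r. apply Rinv_0_lt_compat; lra. nra.
Qed.

Lemma Nf_gt a b al s : 0 < a -> 0 <= b -> 0 < al -> 0 < s -> s < Nf a b al s.
Proof.
  intros. unfold Nf. pose proof (Nf_pos_c a b al H H0 H1).
  pose proof (Rpow_pos s (al+1)).
  assert (E: ((al + 1) * s + b / a * Rpower s (al + 1)) / al - s = (s + b / a * Rpower s (al + 1)) / al) by (field; lra).
  assert (0 < (s + b / a * Rpower s (al + 1)) / al).
  { apply Rdiv_lt_0_compat; nra. }
  lra.
Qed.

Lemma Nf_deriv a b al s : 0 < a -> 0 < al -> 0 < s ->
  is_derive (Nf a b al) s (((al + 1) + b / a * (al + 1) * Rpower s al) / al).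
Proof.
  intros. 
  assert (HP : is_derive (fun x => Rpower x (al+1)) s ((al+1) * Rpower s al)).
  { apply is_derive_Reals. replace al with (al + 1 - 1) at 2 by ring.
    apply derivable_pt_lim_power; auto. }
  apply (is_derive_ext (fun x => /al * ((al+1)*x + (b/a)*Rpower x (al+1)))).
  { intros t; unfold Nf; cbv beta; change (/ al * ((al + 1) * t + b / a * Rpower t (al + 1)) = ((al + 1) * t + b / a * Rpower t (al + 1)) / al); field; lra. }
  replace (((al + 1) + b / a * (al + 1) * Rpower s al) / al)
    with (/al * ((al+1)*1 + (b/a)*((al+1) * Rpower s al))) by (field; lra).
  apply is_derive_scal. apply (is_derive_plus (fun x => (al+1)*x) (fun x => (b/a)*Rpower x (al+1))).
  apply is_derive_scal. apply is_derive_Reals, derivable_pt_lim_id.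
  apply is_derive_scal. auto.
Qed.

Lemma Nf_cont a b al s : 0 < a -> 0 < al -> 0 < s -> continuity_pt (Nf a b al) s.
Proof.
  intros. apply derivable_continuous_pt. exists (((al + 1) + b / a * (al + 1) * Rpower s al) / al).
  apply is_derive_Reals. apply Nf_deriv; auto.
Qed.

Lemma Rpow_le1 x al : 0 < x <= 1 -> 0 < al -> Rpower x al <= 1.
Proof.
  intros. unfold Rpower. rewrite <- exp_0. 
  destruct (Req_dec x 1). subst. rewrite ln_1, Rmult_0_r. lra.
  left. apply exp_increasing.
  assert (ln x < 0). { rewrite <- ln_1. apply ln_increasing; lra. } nra.
Qed.

Lemma Nf_exists a b al n : 0 < a -> 0 <= b -> 0 < al -> 0 < n ->
  exists s, 0 < s < n /\ Nf a b al s = n.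
Proof.
  intros Ha Hb Hal Hn. set (c := b / a).
  assert (Hc : 0 <= c) by (apply (Nf_pos_c a b al); auto).
  set (m := Rmin 1 n).
  assert (Hm : 0 < m <= 1 /\ m <= n) by (unfold m, Rmin; destruct Rle_dec; lra).
  set (s0 := m * al / (2 * (al + 1 + c))).
  assert (Hs0 : 0 < s0 < m).
  { unfold s0; split. apply Rdiv_lt_0_compat; nra.
    apply Rmult_lt_reg_r with (2 * (al + 1 + c)). nra. field_simplify; nra. }
  assert (HN0 : Nf a b al s0 < n).
  { unfold Nf. rewrite Rpow_S by lra. fold c.
    assert (Rpower s0 al <= 1) by (apply Rpow_le1; lra).
    pose proof (Rpow_pos s0 al).
    assert (c * (Rpower s0 al * s0) <= c * s0) by (apply Rmult_le_compat_l; nra).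
    assert ((al + 1) * s0 + c * (Rpower s0 al * s0) <= (al+1+c) * s0) by nra.
    assert ((al+1+c) * s0 / al = m / 2) by (unfold s0; field; lra).
    assert (((al + 1) * s0 + c * (Rpower s0 al * s0)) / al <= (al+1+c) * s0 / al).
    { apply Rmult_le_compat_r; [left; apply Rinv_0_lt_compat; lra| auto]. }
    lra. }
  assert (HNn : n < Nf a b al n) by (apply Nf_gt; auto).
  destruct (Ranalysis5.IVT_interv (fun x => Nf a b al x - n) s0 n) as [z [Hz1 Hz2]].
  - intros x Hx. apply continuity_pt_minus. apply Nf_cont; lra. apply continuity_pt_const. intros u v; auto.
  - lra.
  - lra.
  - lra.
  - exists z. split; [|lra]. split; [lra|].
    destruct Hz1 as [_ [Hlt|Heq]]; auto. subst. lra.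
Qed.

Lemma sstar_spec a b al n : 0 < a -> 0 <= b -> 0 < al -> 0 < n ->
  0 < sstar a b al n < n /\ Feq a b al n (sstar a b al n) = 0.
Proof.
  intros. unfold sstar. apply epsilon_spec.
  destruct (Nf_exists a b al n) as [s [Hs HN]]; auto.
  exists s. split; auto. apply Feq_iff; auto; lra.
Qed.

Lemma sstar_N a b al n : 0 < a -> 0 <= b -> 0 < al -> 0 < n ->
  0 < sstar a b al n < n /\ Nf a b al (sstar a b al n) = n.
Proof.
  intros. destruct (sstar_spec a b al n) as [H3 H4]; auto. split; auto.
  apply Feq_iff; auto; lra.
Qed.

Lemma Nf_inj a b al s1 s2 : 0 < a -> 0 <= b -> 0 < al -> 0 < s1 -> 0 < s2 ->
  Nf a b al s1 = Nf a b al s2 -> s1 = s2.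
Proof.
  intros. destruct (Rtotal_order s1 s2) as [H5|[H5|H5]]; auto.
  pose proof (Nf_incr a b al s1 s2); lra.
  pose proof (Nf_incr a b al s2 s1); lra.
Qed.



Lemma S_char a b al s : 0 < a -> 0 <= b -> 0 < al -> 0 < s ->
  sstar a b al (Nf a b al s) = s.
Proof.
  intros. pose proof (Nf_gt a b al s H H0 H1 H2).
  destruct (sstar_N a b al (Nf a b al s)) as [H4 H5]; auto; try lra.
  apply (Nf_inj a b al); auto; lra.
Qed.

Lemma Nf_c_le a1 b1 a2 b2 al s : 0 < al -> 0 < s -> b2 / a2 <= b1 / a1 ->
  Nf a2 b2 al s <= Nf a1 b1 al s.
Proof.
  intros. unfold Nf. pose proof (Rpow_pos s (al+1)).
  apply Rmult_le_compat_r; [left; apply Rinv_0_lt_compat; lra|]. nra.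
Qed.

Lemma Nf_c_lt a1 b1 a2 b2 al s : 0 < al -> 0 < s -> b2 / a2 < b1 / a1 ->
  Nf a2 b2 al s < Nf a1 b1 al s.
Proof.
  intros. unfold Nf. pose proof (Rpow_pos s (al+1)).
  apply Rmult_lt_compat_r; [apply Rinv_0_lt_compat; lra|]. nra.
Qed.

Lemma cmp_le a1 b1 a2 b2 al n : 0 < a1 -> 0 < a2 -> 0 <= b1 -> 0 <= b2 -> 0 < al -> 0 < n ->
  b2 / a2 <= b1 / a1 -> sstar a1 b1 al n <= sstar a2 b2 al n.
Proof.
  intros. destruct (sstar_N a1 b1 al n) as [H6 H7]; auto.
  destruct (sstar_N a2 b2 al n) as [H8 H9]; auto.
  destruct (Rle_lt_dec (sstar a1 b1 al n) (sstar a2 b2 al n)); auto.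
  pose proof (Nf_incr a2 b2 al (sstar a2 b2 al n) (sstar a1 b1 al n)).
  pose proof (Nf_c_le a1 b1 a2 b2 al (sstar a1 b1 al n)). lra.
Qed.

Lemma cmp_lt a1 b1 a2 b2 al n : 0 < a1 -> 0 < a2 -> 0 <= b1 -> 0 <= b2 -> 0 < al -> 0 < n ->
  b2 / a2 < b1 / a1 -> sstar a1 b1 al n < sstar a2 b2 al n.
Proof.
  intros. destruct (sstar_N a1 b1 al n) as [H6 H7]; auto.
  destruct (sstar_N a2 b2 al n) as [H8 H9]; auto.
  destruct (Rlt_le_dec (sstar a1 b1 al n) (sstar a2 b2 al n)); auto.
  destruct r.
  - pose proof (Nf_incr a2 b2 al (sstar a2 b2 al n) (sstar a1 b1 al n)).
    pose proof (Nf_c_lt a1 b1 a2 b2 al (sstar a1 b1 al n)). lra.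
  - rewrite H10 in H9. pose proof (Nf_c_lt a1 b1 a2 b2 al (sstar a1 b1 al n)). lra.
Qed.

Lemma n_lt a b al n1 n2 : 0 < a -> 0 <= b -> 0 < al -> 0 < n1 -> n1 < n2 ->
  sstar a b al n1 < sstar a b al n2.
Proof.
  intros. destruct (sstar_N a b al n1) as [H6 H7]; auto.
  destruct (sstar_N a b al n2) as [H8 H9]; auto; try lra.
  destruct (Rlt_le_dec (sstar a b al n1) (sstar a b al n2)); auto.
  destruct r.
  - pose proof (Nf_incr a b al (sstar a b al n2) (sstar a b al n1)). lra.
  - rewrite H4 in H9. lra.
Qed.

Lemma n_le a b al n1 n2 : 0 < a -> 0 <= b -> 0 < al -> 0 < n1 -> n1 <= n2 ->
  sstar a b al n1 <= sstar a b al n2.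
Proof.
  intros. destruct H3. left; apply n_lt; auto. subst; lra.
Qed.

Lemma ratio a b al n : 0 < a -> 0 <= b -> 0 < al -> 0 < n ->
  sstar a b al n / n = al / (al + 1 + b / a * Rpower (sstar a b al n) al).
Proof.
  intros. destruct (sstar_N a b al n) as [H6 H7]; auto.
  set (s := sstar a b al n) in *. pose proof (Rpow_pos s al).
  pose proof (Nf_pos_c a b al H H0 H1).
  unfold Nf in H7. rewrite Rpow_S in H7 by lra.
  rewrite <- H7. assert (0 < (al+1)*a) by nra. assert (0 < (al+1)*s*a) by (apply Rmult_lt_0_compat; nra). assert (0 <= b * Rpower s al) by nra. assert (0 <= b * (Rpower s al * s)) by nra. field. repeat split; nra.
Qed.

Lemma tangent t al : 0 < t -> t <> 1 -> 0 < al -> 1 - al * (t - 1) < Rpower t (- al).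
Proof.
  intros. assert (ln t <> 0).
  { intro. apply H0. rewrite <- (exp_ln t) by auto. rewrite H2. apply exp_0. }
  pose proof (exp_ineq1 (ln t) H2). rewrite exp_ln in H3 by auto.
  unfold Rpower. pose proof (exp_ineq1_le (-al * ln t)). nra.
Qed.

Lemma cost_min a b al n x s : 0 < a -> 0 <= b -> 0 < al -> 0 < x < n -> 0 < s < n ->
  s <> x -> Feq a b al n x = 0 -> cost a b al n x < cost a b al n s.
Proof.
  intros Ha Hb Hal Hx Hs Hsx HF. unfold Feq in HF. unfold cost.
  replace (- al - 1) with (- (al + 1)) in HF by ring.
  rewrite !Rpower_Ropp, Rpow_S in * by lra.
  pose proof (Rpow_pos x al) as HP. pose proof (Rpow_pos s al) as HQ.
  set (P := Rpower x al) in *. set (Q := Rpower s al) in *.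
  assert (HK : 1 - al * (s / x - 1) < P / Q).
  { replace (P / Q) with (Rpower (s / x) (- al)).
    apply tangent; auto. apply Rdiv_lt_0_compat; lra.
    intro E. apply Hsx. apply (Rmult_eq_reg_r (/ x)). unfold Rdiv in E. rewrite E. field; lra.
    apply Rinv_neq_0_compat; lra.
    unfold Rpower, P, Q, Rpower. rewrite ln_div by lra.
    unfold Rdiv. rewrite <- exp_Ropp, <- exp_plus. f_equal. ring. }
  assert (Eb : b = al * a * n * / (P * x) - (al + 1) * a * / P) by lra.
  subst b.
  assert (E1 : (a * / P + (al * a * n * / (P * x) - (al + 1) * a * / P)) / (n - x) = al * a / (P * x)).
  { field. lra. }
  rewrite E1.
  apply Rmult_lt_reg_r with (n - s); [lra|].
  replace ((a * / Q + (al * a * n * / (P * x) - (al + 1) * a * / P)) / (n - s) * (n - s))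
    with (a * / Q + (al * a * n * / (P * x) - (al + 1) * a * / P)) by (field; lra).
  apply Rmult_lt_reg_r with (P * x / a). apply Rdiv_lt_0_compat; nra.
  replace (al * a / (P * x) * (n - s) * (P * x / a)) with (al * (n - s)) by (field; lra).
  replace ((a * / Q + (al * a * n * / (P * x) - (al + 1) * a * / P)) * (P * x / a))
    with (P / Q * x + al * n - (al + 1) * x) by (field; lra).
  assert (x * (1 - al * (s / x - 1)) = x - al * (s - x)) by (field; lra).
  nra.
Qed.

Lemma lim_part a b al : 0 < a -> 0 < b -> 0 < al ->
  is_lim (fun m => sstar a b al m / m) p_infty 0.
Proof.
  intros Ha Hb Hal. apply is_lim_spec. intro eps. simpl.
  set (c := b / a). assert (Hc : 0 < c) by (apply Rdiv_lt_0_compat; lra).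
  pose proof (cond_pos eps) as He.
  set (X := al / (eps * c) + 1).
  assert (HX : al < eps * c * X).
  { unfold X. rewrite Rmult_plus_distr_l. replace (eps * c * (al / (eps * c))) with al by (field; nra). nra. }
  assert (HX0 : 0 < X) by (unfold X; assert (0 < al / (eps*c)) by (apply Rdiv_lt_0_compat; nra); lra).
  set (T := Rpower X (/ al)).
  assert (HT : 0 < T) by apply Rpow_pos.
  assert (HTX : Rpower T al = X).
  { unfold T. rewrite Rpower_mult. replace (/ al * al) with 1 by (field; lra). apply Rpower_1; auto. }
  exists (Nf a b al T). intros m Hm.
  pose proof (Nf_gt a b al T Ha (Rlt_le _ _ Hb) Hal HT).
  assert (Hm0 : 0 < m) by lra.
  destruct (sstar_N a b al m) as [H1 H2]; auto; try lra.
  assert (HST : T < sstar a b al m).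
  { destruct (Rlt_le_dec T (sstar a b al m)) as [|[H3|H3]]; auto.
    pose proof (Nf_incr a b al (sstar a b al m) T Ha (Rlt_le _ _ Hb) Hal (proj1 H1) H3). lra.
    rewrite H3 in H2. lra. }
  assert (HP : X < Rpower (sstar a b al m) al).
  { rewrite <- HTX. apply Rlt_Rpower_l; lra. }
  rewrite ratio by lra. fold c.
  set (P := Rpower (sstar a b al m) al) in *.
  assert (0 < al / (al + 1 + c * P)) by (apply Rdiv_lt_0_compat; nra).
  rewrite Rminus_0_r, Rabs_pos_eq by lra.
  apply Rmult_lt_reg_r with (al + 1 + c * P). nra.
  replace (al / (al + 1 + c * P) * (al + 1 + c * P)) with al by (field; nra).
  assert (eps * c * X < eps * c * P) by (apply Rmult_lt_compat_l; nra).
  nra.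
Qed.

Definition Nd a b al s := ((al + 1) + b / a * (al + 1) * Rpower s al) / al.

Lemma Nd_pos a b al s : 0 < a -> 0 <= b -> 0 < al -> 0 < Nd a b al s.
Proof.
  intros. unfold Nd. pose proof (Nf_pos_c a b al H H0 H1). pose proof (Rpow_pos s al).
  assert (0 <= b / a * (al + 1) * Rpower s al) by (apply Rmult_le_pos; [apply Rmult_le_pos|]; lra).
  apply Rdiv_lt_0_compat; nra.
Qed.

Lemma sstar_deriv a b al n : 0 < a -> 0 <= b -> 0 < al -> 0 < n ->
  derivable_pt_lim (fun m => sstar a b al m) n (1 / Nd a b al (sstar a b al n)).
Proof.
  intros Ha Hb Hal Hn.
  set (g := fun m => sstar a b al m).
  set (f := Nf a b al).
  assert (Hlb : 0 < n / 2) by lra.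
  assert (Hub : 0 < 2 * n) by lra.
  destruct (sstar_N a b al (n/2)) as [L1 L2]; auto.
  destruct (sstar_N a b al (2*n)) as [U1 U2]; auto.
  destruct (sstar_N a b al n) as [M1 M2]; auto.
  assert (Hgpos : forall y, g (n/2) <= y -> 0 < y).
  { intros; unfold g in *; lra. }
  assert (Prf : forall y, g (n/2) <= y <= g (2*n) -> derivable_pt f y).
  { intros y Hy. exists (Nd a b al y). apply is_derive_Reals. apply Nf_deriv; auto.
    apply Hgpos; tauto. }
  assert (Hinc : g (n/2) <= g n <= g (2*n)).
  { unfold g; split; apply n_le; auto; lra. }
  assert (Hcomp : forall x, n/2 <= x <= 2*n -> comp f g x = id x).
  { intros x Hx. unfold comp, id, f, g. apply sstar_N; auto; lra. }
  assert (Hcont : continuity_pt g n).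
  { assert (Hlu : g (n/2) < g (2*n)) by (unfold g; apply n_lt; auto; lra).
    apply (Ranalysis5.continuity_pt_recip_interv f g (g (n/2)) (g (2*n)) Hlu).
    - intros x y Hx Hxy Hy. apply Nf_incr; auto; unfold g in *; lra.
    - intros x Hx1 Hx2. unfold f, g in Hx1, Hx2. rewrite L2 in Hx1. rewrite U2 in Hx2.
      apply Hcomp; lra.
    - intros x Hx1 Hx2. unfold f, g in Hx1, Hx2. rewrite L2 in Hx1. rewrite U2 in Hx2.
      unfold g; split; apply n_le; auto; lra.
    - intros y Hy. apply Nf_cont; auto. apply Hgpos; tauto.
    - unfold f, g. rewrite L2, U2. lra. }
  assert (Hd : derive_pt f (g n) (Prf (g n) Hinc) = Nd a b al (g n)).
  { apply derive_pt_eq_0. apply is_derive_Reals. apply Nf_deriv; auto. unfold g; lra. }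
  pose proof (Ranalysis5.derivable_pt_lim_recip_interv f g (n/2) (2*n) n Prf Hcont) as R.
  specialize (R ltac:(lra) ltac:(lra) Hinc Hcomp).
  rewrite Hd in R. apply R.
  pose proof (Nd_pos a b al (g n) Ha Hb Hal). lra.
Qed.

Lemma deriv_part a b al n : 0 < a -> 0 <= b -> 0 < al -> 0 < n ->
  exists d, is_derive (fun m => sstar a b al m / m) n d /\
       - (al / (al + 1)) * (b / a) * Rpower n (al - 1) <= d <= 0.
Proof.
  intros Ha Hb Hal Hn.
  pose proof (sstar_deriv a b al n Ha Hb Hal Hn) as HD.
  destruct (sstar_N a b al n) as [H1 H2]; auto.
  set (S := sstar a b al n) in *.
  set (g' := 1 / Nd a b al S) in *.
  exists ((g' * n - 1 * S) / Rsqr n).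
  split.
  { apply is_derive_Reals.
    exact (derivable_pt_lim_div (fun m => sstar a b al m) (fun m => m) n g' 1 HD (derivable_pt_lim_id n) ltac:(lra)). }
  set (c := b / a) in *. assert (Hc : 0 <= c) by (apply (Nf_pos_c a b al); auto).
  pose proof (Rpow_pos S al) as HP.
  set (P := Rpower S al) in *.
  set (u := c * P).
  assert (Hu : 0 <= u) by (unfold u; nra).
  unfold Nf in H2. rewrite Rpow_S in H2 by lra. fold P in H2.
  assert (Hn' : n = S * (al + 1 + u) / al). { rewrite <- H2. unfold u, c. field. lra. }
  assert (Eg : g' * n - 1 * S = - (al * S * u) / ((al + 1) * (1 + u))).
  { unfold g', Nd. fold c P. rewrite Hn'. unfold u. assert (0 <= c * P) by nra. field. repeat split; nra. }
  rewrite Eg.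
  assert (HSn : 0 < Rsqr n) by (unfold Rsqr; nra).
  assert (HD0 : 0 < (al + 1) * (1 + u)) by nra.
  assert (E2 : - (al * S * u) / ((al + 1) * (1 + u)) / Rsqr n
     = - (al * c * (S * P / (1 + u)) / ((al + 1) * Rsqr n))).
  { unfold u. field. split; [unfold Rsqr; nra|]. split; [nra|]. fold u; lra. }
  rewrite E2.
  assert (HSP : 0 <= S * P / (1 + u)) by (apply Rdiv_le_0_compat; nra).
  assert (HA : 0 <= al * c * (S * P / (1 + u)) / ((al + 1) * Rsqr n)).
  { apply Rdiv_le_0_compat; [|nra]. apply Rmult_le_pos; [|lra]. apply Rmult_le_pos; lra. }
  split; [|lra].
  assert (EPn : Rpower n al = Rpower n (al - 1) * n).
  { rewrite <- Rpow_S by lra. f_equal. ring. }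
  pose proof (Rpow_pos n (al - 1)) as HPn1.
  assert (HPP : P <= Rpower n al) by (apply Rle_Rpower_l; lra).
  assert (HSP2 : S * P / (1 + u) <= S * P).
  { apply Rmult_le_reg_r with (1 + u); [lra|]. unfold Rdiv. rewrite Rmult_assoc, Rinv_l by lra. assert (0 <= S*P*u) by (apply Rmult_le_pos; nra). nra. }
  assert (HSP3 : S * P <= n * Rpower n al) by (apply Rmult_le_compat; lra).
  assert (E3 : al / (al + 1) * c * Rpower n (al - 1) = al * c * (n * Rpower n al) / ((al + 1) * Rsqr n)).
  { rewrite EPn. unfold Rsqr. field. lra. }
  assert (al * c * (S * P / (1 + u)) / ((al + 1) * Rsqr n) <= al * c * (n * Rpower n al) / ((al + 1) * Rsqr n)).
  { unfold Rdiv. apply Rmult_le_compat_r. left; apply Rinv_0_lt_compat; nra.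
    apply Rmult_le_compat_l. apply Rmult_le_pos; lra. lra. }
  replace (- (al / (al + 1)) * c * Rpower n (al - 1)) with (- (al / (al + 1) * c * Rpower n (al - 1))) by ring.
  lra.
Qed.

Lemma div_anti b a1 a2 : 0 <= b -> 0 < a1 -> a1 <= a2 -> b / a2 <= b / a1.
Proof. intros. unfold Rdiv. apply Rmult_le_compat_l; auto. apply Rinv_le_contravar; lra. Qed.

Lemma div_anti_s b a1 a2 : 0 < b -> 0 < a1 -> a1 < a2 -> b / a2 < b / a1.
Proof. intros. unfold Rdiv. apply Rmult_lt_compat_l; auto. apply Rinv_lt_contravar; nra. Qed.

Theorem proposition1 :
  (forall a b al n, 0 < a -> 0 <= b -> 0 < al -> 0 < n ->
     (0 < sstar a b al n < n /\ Feq a b al n (sstar a b al n) = 0) /\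
     (forall s, 0 < s < n -> Feq a b al n s = 0 -> s = sstar a b al n) /\
     (forall s, 0 < s < n -> s <> sstar a b al n ->
        cost a b al n (sstar a b al n) < cost a b al n s)) /\
  (forall a1 a2 b al n, 0 < a1 -> a1 <= a2 -> 0 <= b -> 0 < al -> 0 < n ->
     sstar a1 b al n <= sstar a2 b al n) /\
  (forall a1 a2 b al n, 0 < a1 -> a1 < a2 -> 0 < b -> 0 < al -> 0 < n ->
     sstar a1 b al n < sstar a2 b al n) /\
  (forall a b1 b2 al n, 0 < a -> 0 <= b1 -> b1 < b2 -> 0 < al -> 0 < n ->
     sstar a b2 al n < sstar a b1 al n) /\
  (forall a b al n1 n2, 0 < a -> 0 <= b -> 0 < al -> 0 < n1 -> n1 < n2 ->
     sstar a b al n1 < sstar a b al n2) /\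
  (forall a al n, 0 < a -> 0 < al -> 0 < n ->
     sstar a 0 al n / n = al / (al + 1)) /\
  (forall a1 a2 b al n, 0 < a1 -> a1 <= a2 -> 0 <= b -> 0 < al -> 0 < n ->
     sstar a1 b al n / n <= sstar a2 b al n / n) /\
  (forall a1 a2 b al n, 0 < a1 -> a1 < a2 -> 0 < b -> 0 < al -> 0 < n ->
     sstar a1 b al n / n < sstar a2 b al n / n) /\
  (forall a b1 b2 al n, 0 < a -> 0 <= b1 -> b1 < b2 -> 0 < al -> 0 < n ->
     sstar a b2 al n / n < sstar a b1 al n / n) /\
  (forall a b al n1 n2, 0 < a -> 0 <= b -> 0 < al -> 0 < n1 -> n1 <= n2 ->
     sstar a b al n2 / n2 <= sstar a b al n1 / n1) /\
  (forall a b al, 0 < a -> 0 < b -> 0 < al ->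
     is_lim (fun m => sstar a b al m / m) p_infty 0) /\
  (forall a b al n, 0 < a -> 0 <= b -> 0 < al -> al < 1 -> 0 < n ->
     exists d, is_derive (fun m => sstar a b al m / m) n d /\
       - (al / (al + 1)) * (b / a) * Rpower n (al - 1) <= d <= 0).
Proof.
  assert (Hi : forall a1 a2 b al n, 0 < a1 -> a1 <= a2 -> 0 <= b -> 0 < al -> 0 < n ->
     sstar a1 b al n <= sstar a2 b al n).
  { intros. apply cmp_le; auto; try lra. apply div_anti; auto. }
  assert (Hi2 : forall a1 a2 b al n, 0 < a1 -> a1 < a2 -> 0 < b -> 0 < al -> 0 < n ->
     sstar a1 b al n < sstar a2 b al n).
  { intros. apply cmp_lt; auto; try lra. apply div_anti_s; auto. }
  assert (Hii : forall a b1 b2 al n, 0 < a -> 0 <= b1 -> b1 < b2 -> 0 < al -> 0 < n ->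
     sstar a b2 al n < sstar a b1 al n).
  { intros. apply cmp_lt; auto; try lra. unfold Rdiv. apply Rmult_lt_compat_r; auto.
    apply Rinv_0_lt_compat; auto. }
  split.
  { intros a b al n Ha Hb Hal Hn. destruct (sstar_spec a b al n) as [H1 H2]; auto.
    split; [auto|split].
    - intros s Hs HF. apply Feq_iff in HF; auto; [|lra].
      pose proof (S_char a b al s Ha Hb Hal (proj1 Hs)) as HS. rewrite HF in HS. auto.
    - intros s Hs Hne. apply cost_min; auto. }
  split; [exact Hi|]. split; [exact Hi2|]. split; [exact Hii|].
  split; [exact n_lt|].
  split.
  { intros a al n Ha Hal Hn.
    assert (HN : Nf a 0 al (al * n / (al + 1)) = n) by (unfold Nf; field; lra).
    pose proof (S_char a 0 al (al * n / (al + 1)) Ha (Rle_refl 0) Hal) as HS.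
    rewrite HN in HS. rewrite HS. field. lra. apply Rdiv_lt_0_compat; nra. }
  split.
  { intros. unfold Rdiv. apply Rmult_le_compat_r. left; apply Rinv_0_lt_compat; auto. apply Hi; auto. }
  split.
  { intros. unfold Rdiv. apply Rmult_lt_compat_r. apply Rinv_0_lt_compat; auto. apply Hi2; auto. }
  split.
  { intros. unfold Rdiv. apply Rmult_lt_compat_r. apply Rinv_0_lt_compat; auto. apply Hii; auto. }
  split.
  { intros a b al n1 n2 Ha Hb Hal Hn1 Hn12.
    rewrite !ratio by lra.
    pose proof (n_le a b al n1 n2 Ha Hb Hal Hn1 Hn12).
    destruct (sstar_N a b al n1) as [H1 _]; auto.
    assert (Rpower (sstar a b al n1) al <= Rpower (sstar a b al n2) al) by (apply Rle_Rpower_l; lra).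
    pose proof (Nf_pos_c a b al Ha Hb Hal).
    pose proof (Rpow_pos (sstar a b al n1) al).
    unfold Rdiv. apply Rmult_le_compat_l; [lra|]. apply Rinv_le_contravar. nra.
    apply Rplus_le_compat_l. apply Rmult_le_compat_l; auto. }
  split.
  { intros. apply lim_part; auto. }
  { intros. apply deriv_part; auto. }
Qed.
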